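(* Let $G$ be a locally compact group, $G_e$ the connected component of its identity and $q_e:G\to G/G_e$ the quotient map. Let $(\eta_{td},G^{td})$ be the totally disconnected compactification of $G$ and $(\tilde{\eta}_{td},(G/G_e)^{td})$ the totally disconnected compactification of $G/G_e$. Then there is an isomorphism of topological groups $\theta:G^{td}\to(G/G_e)^{td}$ with $\theta\circ\eta_{td}=\tilde{\eta}_{td}\circ q_e$; that is, the compactifications $(\eta_{td},G^{td})$ and $(\tilde{\eta}_{td}\circ q_e,(G/G_e)^{td})$ of $G$ coincide. In particular $G^{td}\cong(G/G_e)^{td}$.
   Context: For a locally compact group $G$, let $(\eta_{ap},G^{ap})$ be its maximal almost periodic (Bohr) compactification: $G^{ap}$ is a compact group and $\eta_{ap}:G\to G^{ap}$ a continuous homomorphism with dense range, universal among such group compactifications. Let $(G^{ap})_e$ be the connected component of the identity in $G^{ap}$ and $q^{ap}_e:G^{ap}\to G^{ap}/(G^{ap})_e$ the quotient map. The totally disconnected compactification of $G$ is $(\eta_{td},G^{td})$ where $G^{td}=G^{ap}/(G^{ap})_e$ and $\eta_{td}=q^{ap}_e\circ\eta_{ap}$. *)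

(* Defs.v *)
From HB Require Import structures.
From mathcomp Require Import all_boot monoid.
From mathcomp Require Import boolp classical_sets functions.
From mathcomp Require Import topology.

Set Implicit Arguments.
Unset Strict Implicit.
Unset Printing Implicit Defensive.

Local Open Scope classical_set_scope.
Local Open Scope group_scope.

HB.mixin Record isTopologicalGroup G of Group G & Topological G := {
  mul_continuous : continuous (fun p : G * G => p.1 * p.2);
  inv_continuous : continuous (fun x : G => x^-1)
}.

#[short(type="topGroupType")]
HB.structure Definition TopologicalGroup :=
  {G of isTopologicalGroup G & Group G & Topological G}.

Definition cont_hom (G H : topGroupType) (f : G -> H) : Prop :=
  (forall x y : G, f (x * y) = f x * f y) /\ continuous f.

Definition compact_group (K : topGroupType) : Prop :=
  compact [set: K] /\ hausdorff_space K.

Definition locally_compact_group (G : topGroupType) : Prop :=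
  locally_compact [set: G] /\ hausdorff_space G.

Definition group_compactification (G K : topGroupType) (eta : G -> K) : Prop :=
  compact_group K /\ cont_hom eta /\ dense (range eta).

Definition ap_compactification (G K : topGroupType) (eta : G -> K) : Prop :=
  group_compactification eta /\
  forall (H : topGroupType) (f : G -> H), group_compactification f ->
    exists g : K -> H, cont_hom g /\ g \o eta = f.

Definition identity_component (G : topGroupType) : set G :=
  connected_component [set: G] 1.

(* (q, Q) realizes the quotient topological group G / G_e with its quotient
   map: q is a continuous, open, surjective homomorphism whose kernel is the
   connected component of the identity of G. *)
Definition quotient_by_identity_component (G Q : topGroupType) (q : G -> Q)
  : Prop :=
  cont_hom q /\ (forall y : Q, exists x : G, q x = y) /\
  (forall U : set G, open U -> open (q @` U)) /\
  q @^-1` [set 1] = @identity_component G.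

Definition topgroup_iso (G H : topGroupType) (theta : G -> H) : Prop :=
  cont_hom theta /\
  exists theta' : H -> G, continuous theta' /\ cancel theta theta' /\
    cancel theta' theta.

(* Main.v *)
Require Import Defs.
From HB Require Import structures.
From mathcomp Require Import all_boot monoid.
From mathcomp Require Import boolp classical_sets functions.
From mathcomp Require Import topology.

Set Implicit Arguments.
Unset Strict Implicit.
Unset Printing Implicit Defensive.

Local Open Scope classical_set_scope.
Local Open Scope group_scope.

Lemma hom1 (X Y : topGroupType) (f : X -> Y) : cont_hom f -> f 1 = 1.
Proof.
case=> fM _; have := fM 1 1; rewrite mulg1 => h.
by apply: (@mulgI _ (f 1)); rewrite -h mulg1.
Qed.

Lemma homV (X Y : topGroupType) (f : X -> Y) x : cont_hom f -> f x^-1 = (f x)^-1.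
Proof.
move=> hf; apply/esym/mulg1_eq; rewrite -hf.1 mulgV; exact: hom1.
Qed.

Lemma hom_comp (X Y Z : topGroupType) (f : X -> Y) (g : Y -> Z) :
  cont_hom f -> cont_hom g -> cont_hom (g \o f).
Proof.
move=> [fM fc] [gM gc]; split; first by move=> x y /=; rewrite fM gM.
by move=> x; apply: continuous_comp; [exact: fc|exact: gc].
Qed.

Lemma lmul_continuous (X : topGroupType) (x : X) : continuous (fun k : X => x * k).
Proof.
move=> k W /= Wn.
have := @mul_continuous X (x, k) W Wn.
move=> [[P Q] [/= Px Qk] PQW].
apply: (filterS _ Qk) => k' Qk'.
apply: (PQW (x, k')); split => //=; exact: nbhs_singleton.
Qed.

Lemma image_component (X Y : topGroupType) (f : X -> Y) : cont_hom f ->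
  forall x, @identity_component X x -> @identity_component Y (f x).
Proof.
move=> hf x Kx; rewrite /identity_component.
apply: (@connected_component_max _ _ (f @` @identity_component X)).
- by exists 1; [exact: connected_component_refl | exact: hom1].
- by [].
- apply: connected_continuous_connected; first exact: component_connected.
  apply: continuous_subspaceT; exact: hf.2.
- by exists x.
Qed.

Section Quot.
Variables (X Y : topGroupType) (q : X -> Y).
Hypothesis Hq : quotient_by_identity_component q.

Lemma qker x : q x = 1 <-> @identity_component X x.
Proof. by case: Hq => _ [_ [_ <-]]. Qed.

Lemma qeq a b : q a = q b -> @identity_component X (a^-1 * b).
Proof.
move=> e; apply/qker; rewrite Hq.1.1 (homV _ Hq.1) e; exact: mulVg.
Qed.

Lemma qsec : exists s : Y -> X, forall y, q (s y) = y.
Proof. have [s hs] := @choice _ _ (fun y x => q x = y) Hq.2.1; by exists s. Qed.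

Lemma factor (Z : topGroupType) (f : X -> Z) : cont_hom f ->
  (forall x, @identity_component X x -> f x = 1) ->
  exists h : Y -> Z, cont_hom h /\ h \o q = f.
Proof.
move=> hf fK; have [s sK] := qsec.
have wd a b : q a = q b -> f a = f b.
  move=> /qeq /fK; rewrite hf.1 (homV _ hf) => e.
  by apply/esym/(mulgI (f a)^-1); rewrite e mulVg.
exists (f \o s); split; last first.
  by apply: funext => x /=; apply: wd; rewrite sK.
split.
  move=> y1 y2 /=; rewrite -hf.1; apply: wd.
  by rewrite Hq.1.1 !sK.
apply/continuousP => V oV.
have -> : (f \o s) @^-1` V = q @` (f @^-1` V).
  apply/seteqP; split => [y /= Vy|y [x /= Vx <-]].
    by exists (s y) => //.
  by rewrite /preimage /= (wd _ x) ?sK.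
apply: Hq.2.2.1; move/continuousP: hf.2; exact.
Qed.


Lemma qopen1 : open (~` [set 1] : set Y).
Proof.
have -> : (~` [set 1] : set Y) = q @` (~` @identity_component X).
  apply/seteqP; split => [y /= y1|_ [x /= Kx <-] /= qx1].
    have [s sK] := qsec; exists (s y); last exact: sK.
    by move=> /qker; rewrite sK.
  by apply: Kx; apply/qker.
apply: Hq.2.2.1; apply: closed_openC; apply: component_closed; exact: closedT.
Qed.

Lemma qhaus : hausdorff_space Y.
Proof.
move=> p r cl; apply: contrapT => npr.
have W1 : (~` [set 1] : set Y) (p * r^-1) by move=> /= /divg1_eq.
have nW : nbhs (p * r^-1) (~` [set 1] : set Y).
  by apply: open_nbhs_nbhs; split => //; exact: qopen1.
have := @mul_continuous Y (p, r^-1) _ nW => -[[P Q] [/= Pp Qr] PQW].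
have Qr' : nbhs r ((fun x : Y => x^-1) @^-1` Q) := @inv_continuous Y r Q Qr.
have [z [Pz Qz]] := cl P _ Pp Qr'.
have := PQW (z, z^-1) (conj Pz Qz); rewrite /= mulgV; exact.
Qed.

Lemma qtd y : @identity_component Y y -> y = 1.
Proof.
set C := @identity_component Y.
set P := q @^-1` C.
have sat (E : bool -> set X) : P = E false `|` E true ->
    separated (E false) (E true) ->
    forall b x z, E b x -> q z = q x -> E b z.
  move=> PE sep b x z Ex ezx.
  set L := (fun k => x * k) @` @identity_component X.
  have cL : connected L.
    apply: connected_continuous_connected; first exact: component_connected.
    exact/continuous_subspaceT/lmul_continuous.
  have Px : P x by rewrite PE; case: b Ex => Ex; [right|left].
  have LP : L `<=` E false `|` E true.
    rewrite -PE => _ [k Kk <-]; rewrite /P /preimage /= Hq.1.1.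
    by move/qker: Kk => ->; rewrite mulg1.
  have Lx : L x by exists 1; [exact: connected_component_refl | exact: mulg1].
  have Lz : L z.
    by exists (x^-1 * z); [apply: qeq; rewrite ezx | exact: mulVKg].
  have disj := separated_disjoint sep.
  have nboth w : E false w -> E true w -> False.
    by move=> h1 h2; have : (E false `&` E true) w by []; rewrite disj.
  case: (connected_subset sep LP cL) => sub; case: b Ex => Ex.
  - by exfalso; exact: (nboth x (sub x Lx) Ex).
  - exact: sub.
  - exact: sub.
  - by exfalso; exact: (nboth x Ex (sub x Lx)).
have cP : connected P.
  apply/connectedP => E [E0 PE sep].
  set F := fun b => q @` E b.
  have gen b : closure (E b) `&` E (~~ b) = set0 ->
      closure (F b) `&` F (~~ b) = set0.
    move=> h; apply/seteqP; split => // w [cly [e1 E1 ey]]; subst w.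
    set O := ~` closure (E b).
    have oO : open O by apply: closed_openC; exact: closed_closure.
    have Oe1 : O e1.
      by move=> c; have : (closure (E b) `&` E (~~ b)) e1 by []; rewrite h.
    have nb : nbhs (q e1) (q @` O).
      by apply: open_nbhs_nbhs; split; [exact: Hq.2.2.1 | exists e1].
    have [_ [[e0 E0b <-] [o Oo eo]]] := cly _ nb.
    apply: Oo; apply: subset_closure; exact: (sat E PE sep b e0).
  have : connected C by exact: component_connected.
  move/connectedP => /(_ F); apply; split.
  - by move=> b; case: (E0 b) => x Ex; exists (q x); exists x.
  - apply/seteqP; split => [z Cz|z [[x Ex <-]|[x Ex <-]]].
    + have [s sK] := qsec.
      have : P (s z) by rewrite /P /preimage /= sK.
      by rewrite PE => -[h|h]; [left|right]; exists (s z).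
    + by have : P x by rewrite PE; left.
    + by have : P x by rewrite PE; right.
  - split; first by apply: (gen false); exact: sep.1.
    rewrite setIC; apply: (gen true); rewrite setIC; exact: sep.2.
have PK : P `<=` @identity_component X.
  apply: connected_component_max => //.
  rewrite /P /preimage /= (hom1 Hq.1); exact: connected_component_refl.
move=> Cy; have [s sK] := qsec; rewrite -(sK y); apply/qker; apply: PK.
by rewrite /P /preimage /= sK.
Qed.

End Quot.

Lemma qcompact (X Y : topGroupType) (q : X -> Y) :
  quotient_by_identity_component q -> compact [set: X] -> compact [set: Y].
Proof.
move=> Hq cX.
have -> : [set: Y] = q @` [set: X].
  apply/seteqP; split => // y _; have [x <-] := Hq.2.1 y; by exists x.
apply: continuous_compact => //; apply: continuous_subspaceT; exact: Hq.1.2.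
Qed.

Lemma dense_eq (X Z : topologicalType) (f g : X -> Z) (D : set X) :
  continuous f -> continuous g -> hausdorff_space Z -> dense D ->
  (forall x, D x -> f x = g x) -> f = g.
Proof.
move=> fc gc hZ dD fg; apply: funext => x; apply: hZ => A B nA nB.
have N : nbhs x (f @^-1` A `&` g @^-1` B) by apply: filterI; [exact: fc|exact: gc].
move: N; rewrite nbhsE => -[O [oO Ox] OS].
have [d [Od Dd]] := dD O (ex_intro _ x Ox) oO.
have [Ad Bd] := OS d Od.
by exists (f d); split => //; rewrite fg.
Qed.

Lemma dense_range_comp (X Y Z : topologicalType) (g : X -> Y) (f : Y -> Z) :
  dense (range g) -> continuous f -> (forall z, exists y, f y = z) ->
  dense (range (f \o g)).
Proof.
move=> dg fc fs O [z Oz] oO.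
have oP : open (f @^-1` O) by move/continuousP: fc; exact.
have [y fy] := fs z.
have Py : (f @^-1` O) y by rewrite /preimage /= fy.
have [w [Pw [x _ ex]]] := dg (f @^-1` O) (ex_intro _ y Py) oP.
by exists (f w); split => //; exists x => //=; rewrite ex.
Qed.

Lemma range_surj (X Y Z : Type) (g : X -> Y) (f : Y -> Z) :
  (forall y, exists x, g x = y) -> range (f \o g) = range f.
Proof.
move=> gs; apply/seteqP; split => [_ [x _ <-]|_ [y _ <-]]; first by exists (g x).
by have [x <-] := gs y; exists x.
Qed.

Theorem proposition2p2
  (G : topGroupType) (HG : locally_compact_group G)
  (Gap Gtd : topGroupType) (etaap : G -> Gap) (qap : Gap -> Gtd)
  (Hap : ap_compactification etaap)
  (Hqap : quotient_by_identity_component qap)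
  (Q : topGroupType) (qe : G -> Q) (Hqe : quotient_by_identity_component qe)
  (Qap Qtd : topGroupType) (etaap' : Q -> Qap) (qap' : Qap -> Qtd)
  (Hap' : ap_compactification etaap')
  (Hqap' : quotient_by_identity_component qap') :
  exists theta : Gtd -> Qtd,
    topgroup_iso theta /\
    theta \o (qap \o etaap) = (qap' \o etaap') \o qe.
Proof.
have hausGtd := qhaus Hqap; have hausQtd := qhaus Hqap'.
have cgGtd : compact_group Gtd := conj (qcompact Hqap Hap.1.1.1) hausGtd.
have cgQtd : compact_group Qtd := conj (qcompact Hqap' Hap'.1.1.1) hausQtd.
set f1 := (qap' \o etaap') \o qe.
have hf1 : cont_hom f1 := hom_comp Hqe.1 (hom_comp Hap'.1.2.1 Hqap'.1).
have df1 : dense (range f1).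
  rewrite /f1 range_surj; last exact: Hqe.2.1.
  apply: dense_range_comp; [exact: Hap'.1.2.2 | exact: Hqap'.1.2 | exact: Hqap'.2.1].
have [g [hg gE]] := Hap.2 _ f1 (conj cgQtd (conj hf1 df1)).
have gK x : @identity_component Gap x -> g x = 1.
  by move=> Kx; apply: (qtd Hqap'); exact: (image_component hg Kx).
have [theta [htheta thE]] := factor Hqap hg gK.
have he : cont_hom (qap \o etaap) := hom_comp Hap.1.2.1 Hqap.1.
have [h0 [hh0 h0E]] := factor Hqe he
  (fun x Kx => (qker Hqap _).2 (image_component Hap.1.2.1 Kx)).
have dh0 : dense (range h0).
  rewrite -(range_surj _ Hqe.2.1) h0E.
  apply: dense_range_comp; [exact: Hap.1.2.2 | exact: Hqap.1.2 | exact: Hqap.2.1].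
have [k [hk kE]] := Hap'.2 _ h0 (conj cgGtd (conj hh0 dh0)).
have kK x : @identity_component Qap x -> k x = 1.
  by move=> Kx; apply: (qtd Hqap); exact: (image_component hk Kx).
have [theta' [htheta' th'E]] := factor Hqap' hk kK.
have e1 a : theta (qap (etaap a)) = f1 a.
  have := congr1 (fun F => F (etaap a)) thE => /= ->.
  exact: (congr1 (fun F => F a) gE).
have e2 a : theta' (f1 a) = qap (etaap a).
  rewrite /f1 /=.
  have := congr1 (fun F => F (etaap' (qe a))) th'E => /= ->.
  have := congr1 (fun F => F (qe a)) kE => /= ->.
  exact: (congr1 (fun F => F a) h0E).
exists theta; split; last by apply: funext => a; exact: e1.
split => //; exists theta'; split; first exact: htheta'.2.
have idc (T : topologicalType) : continuous (@id T) by move=> x; exact: cvg_id.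
have E1 : theta' \o theta = id.
  apply: (@dense_eq _ _ _ _ (range (qap \o etaap)) _ (idc _) hausGtd).
  + by move=> y; apply: continuous_comp; [exact: htheta.2 | exact: htheta'.2].
  + apply: dense_range_comp; [exact: Hap.1.2.2 | exact: Hqap.1.2 | exact: Hqap.2.1].
  + by move=> _ [a _ <-]; rewrite /= e1 e2.
have E2 : theta \o theta' = id.
  apply: (@dense_eq _ _ _ _ (range f1) _ (idc _) hausQtd).
  + by move=> y; apply: continuous_comp; [exact: htheta'.2 | exact: htheta.2].
  + exact: df1.
  + by move=> _ [a _ <-]; rewrite /= e2 e1.
by split => x; [exact: (congr1 (fun F => F x) E1) | exact: (congr1 (fun F => F x) E2)].
Qed.
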